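(* For any $s\in\mathbb R$ and any $a,b\ge0$, $$\lim_{n\to\infty}\Biggl(\sum_{i=0}^n\binom ni^sa^ib^{n-i}\Biggr)^{1/n}=\begin{cases}(a^{1/s}+b^{1/s})^s&\text{if }s>0,\\ \max\{a,b\}&\text{if }s\le0.\end{cases}$$
   Context: The convention $0^0=1$ is used in the terms $a^ib^{n-i}$. *)

(* Defs.v *)
From HB Require Import structures.
From mathcomp Require Import all_boot all_order all_algebra.
From mathcomp Require Import all_classical all_reals all_analysis.
Set Implicit Arguments. Unset Strict Implicit. Unset Printing Implicit Defensive.
Import Order.TTheory GRing.Theory Num.Theory.
Local Open Scope ring_scope.

(* S_n(s,a,b) = \sum_{i=0}^n C(n,i)^s a^i b^(n-i); a^+0 = 1 encodes 0^0 = 1. *)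
Definition binom_pow_sum (R : realType) (s a b : R) (n : nat) : R :=
  \sum_(i < n.+1) (('C(n, i))%:R `^ s) * a ^+ i * b ^+ (n - i).

Definition binom_pow_limit (R : realType) (s a b : R) : R :=
  if 0 < s then (a `^ (s^-1) + b `^ (s^-1)) `^ s else Num.max a b.

(* Main.v *)
Require Import Defs.
From HB Require Import structures.
From mathcomp Require Import all_boot all_order all_algebra.
From mathcomp Require Import all_classical all_reals all_analysis.
From mathcomp Require Import ring lra.
Import Order.TTheory GRing.Theory Num.Theory.
Local Open Scope ring_scope.
Import numFieldNormedType.Exports.
Local Open Scope classical_set_scope.

Section S.
Variable R : realType.

Lemma aux_ineq (y r iy ir : R) : 1 <= y -> 0 < r -> r * r = y + 1 -> iy * y = 1 -> ir * r = 1 ->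
  0 < iy -> 0 < ir -> iy * (2 * r) <= 4 * ir.
Proof. move=> *. nra. Qed.

Lemma ln_div_cvg : (fun n : nat => n%:R^-1 * ln (n.+1%:R : R)) @ \oo --> 0.
Proof.
apply: (@squeeze_cvgr _ _ _ _ (fun=> 0) (fun n => 4 * Num.sqrt (harmonic n))).
- near=> n.
  have n1 : (1 <= n)%N by near: n; exact: nbhs_infty_ge.
  apply/andP; split.
    by rewrite mulr_ge0 ?invr_ge0 ?ler0n ?ln_ge0 // ler1n.
  set y : R := n%:R.
  have y1 : 1 <= y by rewrite /y ler1n.
  have -> : (n.+1%:R : R) = y + 1 by rewrite /y -natr1.
  set r := Num.sqrt (y + 1).
  have r0 : 0 < r by rewrite sqrtr_gt0; lra.
  have rr : r * r = y + 1 by rewrite -expr2 sqr_sqrtr //; lra.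
  have lnle : ln (y + 1) <= 2 * r.
    rewrite -rr -expr2 lnXn // mulr2n -mulr2n mulr_natl ler_wMn2r //.
    exact/ltW/ln_sublinear.
  apply: (le_trans (ler_wpM2l _ lnle)); first by rewrite invr_ge0; lra.
  have -> : harmonic n = (y + 1)^-1 by rewrite /= /y -natr1.
  rewrite sqrtrV; last lra.
  rewrite -/r.
  have H := @aux_ineq y r y^-1 r^-1 y1 r0 rr.
  apply: H; [apply: mulVf|apply: mulVf|rewrite invr_gt0|rewrite invr_gt0];
    rewrite ?gt_eqF //; lra.
- exact: cvg_cst.
- rewrite -(mulr0 4) -sqrtr0.
  apply: cvgMl_tmp.
  apply: (continuous_cvg _ (@sqrt_continuous R 0)).
  exact: cvg_harmonic.
Unshelve. all: end_near. Qed.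

Lemma root_cvg1 (x : R) : (fun n : nat => (n.+1%:R : R) `^ (x * n%:R^-1)) @ \oo --> (1:R).
Proof.
have -> : (fun n : nat => (n.+1%:R : R) `^ (x * n%:R^-1)) =
   expR \o (fun n : nat => x * (n%:R^-1 * ln (n.+1%:R : R))).
  by apply/funext => n /=; rewrite /powR pnatr_eq0 /= mulrA.
rewrite -[X in _ --> X]expR0; apply: (continuous_cvg _ (@continuous_expR R 0)).
rewrite -[X in _ --> X](mulr0 x). apply: cvgMl_tmp; exact: ln_div_cvg.
Qed.

Lemma squeeze_root (T : nat -> R) (L k : R) : 0 <= L -> 0 <= k ->
  (forall n, (0 < n)%N -> L ^+ n * (n.+1%:R `^ (- k)) <= T n <= n.+1%:R * L ^+ n) ->
  (fun n => T n `^ n%:R^-1) @ \oo --> L.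
Proof.
move=> L0 k0 H.
apply: (@squeeze_cvgr _ _ _ _ (fun n : nat => L * (n.+1%:R : R) `^ (- k * n%:R^-1))
   (fun n : nat => L * (n.+1%:R : R) `^ (1 * n%:R^-1))); last first.
- rewrite -[X in _ --> X]mulr1; apply: cvgMl_tmp; exact: root_cvg1.
- rewrite -[X in _ --> X]mulr1; apply: cvgMl_tmp; exact: root_cvg1.
near=> n.
have n0 : (0 < n)%N by near: n; exact: nbhs_infty_gt.
have /andP[lo hi] := H n n0.
have key c : 0 <= c -> (L ^+ n * c) `^ (n%:R^-1) = L * c `^ (n%:R^-1).
  move=> c0; rewrite powRM ?exprn_ge0 // -powR_mulrn // -powRrM mulfV ?powRr1 //.
  by rewrite pnatr_eq0 -lt0n.
have T0 : 0 <= T n by apply: le_trans lo; rewrite mulr_ge0 ?exprn_ge0 ?powR_ge0.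
apply/andP; split.
  rewrite powRrM -key ?powR_ge0 //.
  apply: ge0_ler_powR => //; rewrite ?invr_ge0 ?ler0n ?nnegrE ?mulr_ge0 ?exprn_ge0 ?powR_ge0 //.
rewrite powRrM powRr1 ?ler0n // -key ?ler0n //.
apply: ge0_ler_powR => //; rewrite ?invr_ge0 ?ler0n ?nnegrE ?mulr_ge0 ?exprn_ge0 ?ler0n //.
by rewrite mulrC.
Unshelve. all: end_near. Qed.


Lemma term_le_sum n (F : 'I_n.+1 -> R) j : (forall i, 0 <= F i) -> F j <= \sum_i F i.
Proof.
move=> F0; rewrite (bigD1 j) //= lerDl; exact: sumr_ge0.
Qed.

Arguments term_le_sum {n F} j.

Lemma case_le0 (s a b : R) : s <= 0 -> 0 <= a -> 0 <= b ->
  (fun n : nat => binom_pow_sum s a b n `^ (n%:R^-1)) @ \oo --> Num.max a b.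
Proof.
move=> s0 a0 b0.
set L := Num.max a b.
have L0 : 0 <= L by rewrite le_max a0.
have aL : a <= L by rewrite le_max lexx.
have bL : b <= L by rewrite le_max lexx orbT.
apply: (@squeeze_root _ _ 0) => // n n0.
have t0 : forall i : 'I_n.+1, 0 <= ('C(n, i))%:R `^ s * a ^+ i * b ^+ (n - i).
  by move=> i; rewrite !mulr_ge0 ?powR_ge0 ?exprn_ge0.
apply/andP; split.
  rewrite oppr0 powRr0 mulr1 /binom_pow_sum.
  have [ab|ba] := leP a b.
    have -> : L = b by rewrite /L max_r.
    apply: (le_trans _ (term_le_sum ord0 t0)).
    by rewrite /= bin0 powR1 subn0 expr0 mul1r mul1r.
  have -> : L = a by rewrite /L max_l // ltW.
  apply: (le_trans _ (term_le_sum ord_max t0)).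
  by rewrite /= binn powR1 subnn expr0 mulr1 mul1r.
rewrite /binom_pow_sum.
apply: le_trans (_ : \sum_(i < n.+1) L ^+ n <= _).
  apply: ler_sum => i _.
  have -> : L ^+ n = 1 * L ^+ i * L ^+ (n - i).
    by rewrite mul1r -exprD subnKC // -ltnS.
  apply: ler_pM; rewrite ?exprn_ge0 ?lerXn2r ?nnegrE //.
    by rewrite mulr_ge0 ?exprn_ge0 ?powR_ge0.
  apply: ler_pM; rewrite ?exprn_ge0 ?powR_ge0 ?lerXn2r ?nnegrE //.
  rewrite -[X in _ <= X](powRr0 ('C(n, i))%:R); apply: (ler_powR _ s0).
  by rewrite ler1n bin_gt0 -ltnS.
by rewrite sumr_const card_ord mulr_natl.
Qed.


Lemma root_pow_eq (s x : R) m : 0 < s -> 0 <= x -> ((x `^ s^-1) ^+ m) `^ s = x ^+ m.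
Proof.
move=> s0 x0; rewrite -powR_mulrn ?powR_ge0 // -!powRrM.
have -> : s^-1 * (m%:R * s) = m%:R.
  field; exact: lt0r_neq0.
by rewrite powR_mulrn.
Qed.

Lemma case_gt0 (s a b : R) : 0 < s -> 0 <= a -> 0 <= b ->
  (fun n : nat => binom_pow_sum s a b n `^ (n%:R^-1)) @ \oo -->
    (a `^ (s^-1) + b `^ (s^-1)) `^ s.
Proof.
move=> s0 a0 b0.
set al := a `^ s^-1; set be := b `^ s^-1.
set M := al + be.
have M0 : 0 <= M by rewrite addr_ge0 ?powR_ge0.
apply: (@squeeze_root _ _ s) => //; rewrite ?powR_ge0 ?ltW // => n n0.
set t := fun i : 'I_n.+1 => ('C(n, i))%:R * al ^+ i * be ^+ (n - i).
have t0 : forall i, 0 <= t i by move=> i; rewrite /t !mulr_ge0 ?exprn_ge0 ?powR_ge0.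
have tsum : \sum_i t i = M ^+ n.
  rewrite /M addrC exprDn; apply: eq_bigr => i _.
  by rewrite /t -mulr_natl /=; ring.
have termE : forall i : 'I_n.+1, ('C(n, i))%:R `^ s * a ^+ i * b ^+ (n - i) = t i `^ s.
  move=> i; rewrite /t !powRM ?mulr_ge0 ?exprn_ge0 ?powR_ge0 ?ler0n //.
  by rewrite !root_pow_eq.
have LE : (M `^ s) ^+ n = (M ^+ n) `^ s.
  by rewrite -!powR_mulrn ?powR_ge0 // -!powRrM mulrC.
rewrite /binom_pow_sum.
under eq_bigr => i _ do rewrite termE.
apply/andP; split.
  have [j hj] : exists j, M ^+ n / n.+1%:R <= t j.
    apply/existsP; apply: contraT; rewrite negb_exists => /forallP hall.
    have : \sum_i t i < \sum_(i < n.+1) M ^+ n / n.+1%:R.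
      apply: ltr_sum; first by apply/hasP; exists ord0; rewrite ?mem_index_enum.
      by move=> i _; rewrite ltNge; exact: hall.
    by rewrite tsum sumr_const card_ord -[X in _ < X]mulr_natr divfK ?pnatr_eq0 // ltxx.
  apply: (le_trans _ (term_le_sum j _)); last by move=> i; exact: powR_ge0.
  apply: (le_trans _ (ge0_ler_powR (ltW s0) _ _ hj)); rewrite ?nnegrE ?t0 //;
    last by rewrite divr_ge0 ?exprn_ge0.
  rewrite LE powRM ?exprn_ge0 ?invr_ge0 ?ler0n // -powR_inv1 ?ler0n //.
  by rewrite -powRrM mulN1r.
apply: (le_trans (_ : _ <= \sum_(i < n.+1) (M `^ s) ^+ n)).
  apply: ler_sum => i _; rewrite LE.
  apply: (ge0_ler_powR (ltW s0)); rewrite ?nnegrE ?t0 ?exprn_ge0 //.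
  by rewrite -tsum; exact: term_le_sum.
by rewrite sumr_const card_ord mulr_natl.
Qed.

End S.

Theorem lemmaA4 (R : realType) (s a b : R) (ha : 0 <= a) (hb : 0 <= b) :
  (fun n : nat => binom_pow_sum s a b n `^ (n%:R^-1)) @ \oo --> binom_pow_limit s a b.
Proof.
rewrite /binom_pow_limit; case: ifPn => hs.
  exact: case_gt0.
by apply: case_le0 => //; rewrite leNgt.
Qed.
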